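(* Let $X$ be a compact metric space and $f\colon X\to X$ a continuous map. Suppose there is $x\in X$ such that $\omega_f(x)$ is infinite, contains a periodic point of $f$, and contains a point which is isolated in $\omega_f(x)$ (with its relative topology). Then there exist $\delta>0$ and an infinite $\delta$-scrambled set for $f$.
   Context: $\omega_f(x)$ denotes the $\omega$-limit set of $x$, i.e. the set of limit points of the sequence $(f^n(x))_{n\ge0}$. For $\delta>0$, a pair $(u,v)$ of points is $\delta$-scrambled if $\liminf_{n\to\infty}d(f^n(u),f^n(v))=0$ and $\limsup_{n\to\infty}d(f^n(u),f^n(v))\ge\delta$; a set is $\delta$-scrambled if every pair of its distinct points is $\delta$-scrambled. *)

(* Defs.v *)
From HB Require Import structures.
From mathcomp Require Import all_boot all_order all_algebra.
From mathcomp Require Import all_classical all_reals all_analysis.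
Set Implicit Arguments. Unset Strict Implicit. Unset Printing Implicit Defensive.
Import Order.TTheory GRing.Theory Num.Theory.
Local Open Scope classical_set_scope.
Local Open Scope ring_scope.

Definition omega_limit {T : topologicalType} (f : T -> T) (x : T) : set T :=
  cluster ((fun n : nat => iter n f x) @ \oo).

Definition periodic_point {T : Type} (f : T -> T) (p : T) : Prop :=
  exists n : nat, (0 < n)%N /\ iter n f p = p.

(* (u,v) is delta-scrambled: liminf d(f^n u, f^n v) = 0 and limsup >= delta
   (liminf/limsup taken in the extended reals, hence always defined) *)
Definition scrambled_pair {R : realType} {X : metricType R} (f : X -> X)
    (delta : R) (u v : X) : Prop :=
  limn_einf (fun n : nat => (mdist (iter n f u) (iter n f v))%:E) = 0%E /\
  (delta%:E <= limn_esup (fun n : nat => (mdist (iter n f u) (iter n f v))%:E))%E.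

Definition scrambled_set {R : realType} {X : metricType R} (f : X -> X)
    (delta : R) (S : set X) : Prop :=
  forall u v, S u -> S v -> u <> v -> scrambled_pair f delta u v.

(* Main.v *)
Require Import Defs.
From HB Require Import structures.
From mathcomp Require Import all_boot all_order all_algebra.
From mathcomp Require Import all_classical all_reals all_analysis.
From mathcomp Require Import lra.
Import Order.TTheory GRing.Theory Num.Theory.
Local Open Scope classical_set_scope.
Local Open Scope ring_scope.


Lemma keyR (R : realType) (a b c0 d1 D0 r0 : R) : r0 <= a -> a <= b + c0 -> c0 <= D0 + d1 ->
  b < r0 / 4 -> d1 < r0 / 4 -> D0 < r0 / 2 -> False.
Proof. by move=> *; lra. Qed.

Section EReal.
Variable R : realType.

Lemma esup_ge (a : nat -> R) (c : R) :
  (forall N, exists n, (N <= n)%N /\ c <= a n) ->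
  (c%:E <= limn_esup (fun n => (a n)%:E))%E.
Proof.
move=> H; rewrite limn_esup_lim; apply: lime_ge; first exact: is_cvg_esups.
apply: nearW => N; have [n [Nn cn]] := H N.
apply: (@le_trans _ _ (a n)%:E); first by rewrite lee_fin.
by apply: ereal_sup_ubound; exists n.
Qed.

Lemma einf_0 (a : nat -> R) :
  (forall n, 0 <= a n) ->
  (forall e, 0 < e -> forall N, exists n, (N <= n)%N /\ a n < e) ->
  limn_einf (fun n => (a n)%:E) = 0%E.
Proof.
move=> a0 H; rewrite limn_einf_lim; apply/eqP; rewrite eq_le; apply/andP; split.
  apply/lee_addgt0Pr => e e0; rewrite add0e.
  apply: lime_le; first exact: is_cvg_einfs.
  apply: nearW => N; have [n [Nn an]] := H e e0 N.
  apply: (@le_trans _ _ (a n)%:E); last by rewrite lee_fin ltW.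
  by apply: ereal_inf_lbound; exists n.
apply: lime_ge; first exact: is_cvg_einfs.
apply: nearW => N; apply: le_ereal_inf_tmp => _ [n _ <-].
by rewrite lee_fin.
Qed.
End EReal.

Section Met.
Context {R : realType} {X : metricType R}.

Definition clus (w : nat -> X) (P : nat -> Prop) (y : X) :=
  forall e, 0 < e -> forall N, exists n, (N <= n)%N /\ P n /\ mdist y (w n) < e.

Lemma cont_eps (g : X -> X) y : continuous g ->
  forall e, 0 < e -> exists2 d, 0 < d & forall z, mdist y z < d -> mdist (g y) (g z) < e.
Proof.
move=> gc e e0.
have := gc y (ball (g y) e) (nbhsx_ballx _ _ e0).
move=> /nbhs_ballP[d d0 sub]; exists d => // z yz.
have h : ball y d z by rewrite ballEmdist.
by have := sub z h; rewrite /= ballEmdist.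
Qed.

Lemma clusterP (w : nat -> X) y :
  cluster (w @ \oo) y <-> clus w (fun _ => True) y.
Proof.
split.
  move=> cl e e0 N.
  have : (w @ \oo) (w @` [set n | (N <= n)%N]).
    by exists N => // n /= Nn; exists n.
  move=> /(cl _ (ball y e)) /(_ (nbhsx_ballx _ _ e0)) [z [[n Nn <-]]].
  by rewrite ballEmdist /= => h; exists n.
move=> H A B [N _ NA] /nbhs_ballP[e e0 eB].
have [n [Nn [_ dn]]] := H e e0 N.
exists (w n); split; first exact: NA.
by apply: eB; rewrite ballEmdist.
Qed.

Lemma compactK (w : nat -> X) (P : nat -> Prop) :
  compact [set: X] -> (forall N, exists n, (N <= n)%N /\ P n) ->
  exists y, clus w P y.
Proof.
move=> cpt H.
pose F := filter_from [set: nat] (fun N => [set n | (N <= n)%N /\ P n]).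
have FF : ProperFilter F.
  apply: filter_from_proper; last first.
    by move=> N _; have [n hn] := H N; exists n.
  apply: filter_fromT_filter; first by exists 0%N.
  move=> i j; exists (maxn i j) => n [ijn Pn]; split; split => //;
  by apply: leq_trans ijn; rewrite ?leq_maxl ?leq_maxr.
have [y [_ cl]] := cpt (w @ F) (fmap_proper_filter w FF) (filterT).
exists y => e e0 N.
have : (w @ F) (w @` [set n | (N <= n)%N /\ P n]).
  by exists N => // n /= Nn; exists n.
move=> /(cl _ (ball y e)) /(_ (nbhsx_ballx _ _ e0)) [z [[n [Nn Pn] <-]]].
by rewrite ballEmdist /= => h; exists n.
Qed.

Lemma clus_sub (w : nat -> X) (P Q : nat -> Prop) y :
  (forall n, P n -> Q n) -> clus w P y -> clus w Q y.
Proof.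
move=> PQ H e e0 N; have [n [Nn [Pn d]]] := H e e0 N.
by exists n; split => //; split => //; apply: PQ.
Qed.

Lemma dist_le_of_clus (w : nat -> X) (P : nat -> Prop) y q rho :
  clus w P y -> (forall n, P n -> mdist q (w n) < rho) -> mdist q y <= rho.
Proof.
move=> H Hr; apply/ler_addgt0Pr => e e0.
have [n [_ [Pn d]]] := H e e0 0%N.
apply: (le_trans (metric_triangle q (w n) y)); apply: ltW.
by apply: ltrD; [apply: Hr | rewrite metric_sym].
Qed.

Lemma min_dist (v : nat -> X) y b :
  (forall i, (i < b)%N -> v i <> y) ->
  exists2 e, 0 < e & forall i, (i < b)%N -> e <= mdist y (v i).
Proof.
elim: b => [|b IH] H.
  by exists 1 => // i.
have [e e0 He] := IH (fun i ib => H i (ltnW ib)).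
have d0 : 0 < mdist y (v b).
  by rewrite mdist_gt0; apply/eqP => yb; apply: (H b) => //.
exists (Num.min e (mdist y (v b))); first by rewrite lt_min e0 d0.
move=> i; rewrite ltnS leq_eqVlt => /orP[/eqP->|ib].
  by rewrite ge_min lexx orbT.
by rewrite ge_min He.
Qed.
End Met.

Section Dyn.
Variables (R : realType) (X : metricType R) (f : X -> X).
Hypothesis cpt : compact [set: X].
Hypothesis fc : continuous f.
Variable x : X.
Let u n := iter n f x.

Lemma iter_cont k : continuous (iter k f).
Proof.
elim: k => [|k IH] y; first exact: cvg_id.
have -> : iter k.+1 f = f \o iter k f by [].
exact: (continuous_comp (IH y) (fc (iter k f y))).
Qed.

Lemma uD a b : iter a f (u b) = u (a + b).
Proof. by rewrite /u iterD. Qed.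

Lemma omega_iter y k : clus u (fun _ => True) y -> clus u (fun _ => True) (iter k f y).
Proof.
move=> H e e0 N.
have [d d0 Hd] := cont_eps (iter k f) y (iter_cont k) e e0.
have [n [Nn [_ dn]]] := H d d0 N.
exists (k + n)%N; split; first by apply: leq_trans Nn (leq_addl _ _).
by split => //; rewrite -uD; apply: Hd.
Qed.

Lemma fin_orbit a b : (a < b)%N -> u a = u b ->
  forall y, clus u (fun _ => True) y -> exists2 i, (i < b)%N & u i = y.
Proof.
move=> ab uab.
have H1 : forall n, exists2 i, (i < b)%N & u n = u i.
  elim/ltn_ind => n IH.
  case: (ltnP n b) => nb; first by exists n.
  have -> : n = ((n - b) + b)%N by rewrite subnK.
  rewrite -uD -uab uD; apply: IH.
  by rewrite -{2}(subnK nb) ltn_add2l.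
move=> y Hy; apply: contrapT => ny.
have [e e0 He] := min_dist u y b
  (fun i ib eq => ny (ex_intro2 _ _ i ib eq)).
have [n [_ [_ dn]]] := Hy e e0 0%N.
have [i ib eqi] := H1 n.
by move: (He i ib); rewrite -eqi leNgt dn.
Qed.


Lemma fin_omega (g : nat -> X) b :
  (forall y, clus u (fun _ => True) y -> exists2 i, (i < b)%N & g i = y) ->
  finite_set (omega_limit f x).
Proof.
move=> H; apply: (sub_finite_set _ (finite_image g (finite_II b))).
by move=> y /clusterP /H [i ib <-]; exists i.
Qed.

Lemma lemmaA q r : infinite_set (omega_limit f x) ->
  clus u (fun _ => True) q -> 0 < r ->
  (forall y, clus u (fun _ => True) y -> mdist q y < r -> y = q) ->
  forall s, (0 < s)%N -> iter s f q <> q.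
Proof.
move=> inf qo r0 iso s s0 per; apply: inf.
apply: (fin_omega (fun i => iter i f q) s).
pose rho := r / 2.
have rho0 : 0 < rho by rewrite divr_gt0.
have rhor : rho < r by rewrite /rho ltr_pdivrMr // ltr_pMr // ltr1n.
case: (pselect (forall N, exists n, (N <= n)%N /\
   (mdist q (u n) < rho /\ rho <= mdist q (u (n + s)%N))))=> [H1|H1].
  exfalso.
  have [y cy] := compactK u _ cpt H1.
  have yo : clus u (fun _ => True) y by apply: clus_sub cy.
  have dq : mdist q y <= rho by apply: (dist_le_of_clus _ _ _ _ _ cy) => n [].
  have yq : y = q by apply: iso => //; apply: le_lt_trans rhor.
  subst y.
  have [d d0 Hd] := cont_eps (iter s f) q (iter_cont s) rho rho0.
  have [n [_ [[_ Pn] dn]]] := cy d d0 0%N.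
  have := Hd _ dn; rewrite per uD addnC.
  by rewrite ltNge Pn.
have [N HN] : exists N, forall n, (N <= n)%N -> mdist q (u n) < rho ->
    mdist q (u (n + s)%N) < rho.
  apply: contrapT => H2; apply: H1 => N; apply: contrapT => H3.
  apply: H2; exists N => n Nn qn; apply: contrapT => H4.
  apply: H3; exists n; split => //; split => //.
  by rewrite leNgt; apply/negP.
have [n0 [Nn0 [_ qn0]]] := qo rho rho0 N.
have Hk : forall k, mdist q (u (n0 + k * s)%N) < rho.
  elim => [|k IHk]; first by rewrite mul0n addn0.
  rewrite mulSn (addnC s) addnA; apply: HN => //.
  exact: leq_trans Nn0 (leq_addr _ _).
pose v k := u (n0 + k * s)%N.
have vu : forall M k, (M <= k)%N -> (M <= n0 + k * s)%N.
  move=> M k Mk; apply: leq_trans Mk _; apply: leq_trans (leq_addl n0 _).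
  by rewrite leq_pmulr.
have vcv : forall e, 0 < e -> exists K, forall k, (K <= k)%N -> mdist q (v k) < e.
  move=> e e0; apply: contrapT => H2.
  have H3 : forall K, exists k, (K <= k)%N /\ e <= mdist q (v k).
    move=> K; apply: contrapT => H4; apply: H2; exists K => k Kk.
    rewrite ltNge; apply/negP => ek; apply: H4; exists k; split => //.
  have [y cy] := compactK v _ cpt H3.
  have yo : clus u (fun _ => True) y.
    move=> e' e'0 M; have [k [Mk [_ d]]] := cy e' e'0 M.
    by exists (n0 + k * s)%N; split; [exact: vu|split].
  have dq : mdist q y <= rho by apply: (dist_le_of_clus _ _ _ _ _ cy) => k _; apply: Hk.
  have yq : y = q by apply: iso => //; apply: le_lt_trans rhor.
  subst y.
  have [k [_ [ek dk]]] := cy e e0 0%N.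
  by move: dk; rewrite ltNge ek.
have unif : forall e, 0 < e -> exists K, forall k i, (K <= k)%N -> (i < s)%N ->
    mdist (iter i f q) (u (n0 + k * s + i)%N) < e.
  move=> e e0.
  suff : forall j, exists K, forall k i, (K <= k)%N -> (i < j)%N ->
    mdist (iter i f q) (u (n0 + k * s + i)%N) < e by apply.
  elim => [|j [K HK]]; first by exists 0%N.
  have [d d0 Hd] := cont_eps (iter j f) q (iter_cont j) e e0.
  have [K' HK'] := vcv d d0.
  exists (maxn K K') => k i Kk; rewrite ltnS leq_eqVlt => /orP[/eqP->|ij].
    rewrite (addnC _ j) -uD; apply: Hd; apply: HK'.
    exact: leq_trans (leq_maxr _ _) Kk.
  by apply: HK => //; exact: leq_trans (leq_maxl _ _) Kk.
move=> y yo; apply: contrapT => ny.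
have [e e0 He] := min_dist (fun i => iter i f q) y s
  (fun i ib eq => ny (ex_intro2 _ _ i ib eq)).
have e20 : 0 < e / 2 by rewrite divr_gt0.
have [K HK] := unif _ e20.
have [n [Nn [_ dn]]] := yo _ e20 (n0 + K * s)%N.
pose t := (n - n0)%N.
have n0n : (n0 <= n)%N by apply: leq_trans (leq_addr _ _) Nn.
have ndec : n = (n0 + t %/ s * s + t %% s)%N by rewrite -addnA -divn_eq subnKC.
have Kt : (K <= t %/ s)%N by rewrite leq_divRL // leq_subRL.
have := HK _ (t %% s)%N Kt (ltn_pmod _ s0); rewrite -ndec => d2.
have := He _ (ltn_pmod t s0).
have := metric_triangle y (u n) (iter (t %% s) f q).
rewrite (metric_sym (u n)) => tri le.
have : mdist y (iter (t %% s) f q) < e.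
  by apply: le_lt_trans tri _; rewrite [e]splitr; apply: ltrD.
by rewrite ltNge le.
Qed.


Lemma iter_per p m j : iter m f p = p -> iter (j * m) f p = p.
Proof.
move=> per; elim: j => [|j IH] //=.
by rewrite mulSn iterD IH per.
Qed.

Lemma pair_ok p m q r c c' : (0 < m)%N -> iter m f p = p ->
  clus u (fun _ => True) p -> clus u (fun _ => True) q -> 0 < r ->
  (forall k, (0 < k)%N -> r <= mdist q (iter k f q)) ->
  (c < c')%N -> (m %| c' - c)%N ->
  scrambled_pair f (r / 2) (u c) (u c').
Proof.
move=> m0 per po qo r0 nonper cc' mdv.
set k := (c' - c)%N.
have ck : c' = (k + c)%N by rewrite subnK // ltnW.
have k0 : (0 < k)%N by rewrite subn_gt0.
have shift : forall n, iter n f (u c) = u (n + c) /\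
    iter n f (u c') = iter k f (u (n + c)%N).
  move=> n; rewrite !uD; split => //; congr u.
  by rewrite ck addnCA addnA.
split.
  apply: einf_0 => [n|e e0 N]; first exact: mdist_ge0.
  have perk : iter k f p = p by rewrite /k -(divnK mdv) iter_per.
  have e20 : 0 < e / 2 by rewrite divr_gt0.
  have [d d0 Hd] := cont_eps (iter k f) p (iter_cont k) _ e20.
  have md0 : 0 < Num.min d (e / 2) by rewrite lt_min d0 e20.
  have [n' [Nn' [_ dn']]] := po _ md0 (N + c)%N.
  exists (n' - c)%N; split; first by rewrite leq_subRL ?(leq_trans (leq_addl _ _) Nn') // addnC.
  have [-> ->] := shift (n' - c)%N.
  rewrite subnK; last exact: leq_trans (leq_addl _ _) Nn'.
  move: dn'; rewrite lt_min => /andP[dd de].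
  have := Hd _ dd; rewrite perk => h.
  apply: le_lt_trans (metric_triangle _ p _) _.
  by rewrite [e]splitr metric_sym; apply: ltrD.
apply: esup_ge => N.
have r40 : 0 < r / 4 by rewrite divr_gt0.
have [d d0 Hd] := cont_eps (iter k f) q (iter_cont k) _ r40.
have md0 : 0 < Num.min d (r / 4) by rewrite lt_min d0 r40.
have [n' [Nn' [_ dn']]] := qo _ md0 (N + c)%N.
exists (n' - c)%N; split; first by rewrite leq_subRL ?(leq_trans (leq_addl _ _) Nn') // addnC.
have [-> ->] := shift (n' - c)%N.
rewrite subnK; last exact: leq_trans (leq_addl _ _) Nn'.
move: dn'; rewrite lt_min => /andP[dd de].
have h := Hd _ dd.
have nk := nonper k k0.
have t1 := metric_triangle q (u n') (iter k f q).
have t2 := metric_triangle (u n') (iter k f (u n')) (iter k f q).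
rewrite (metric_sym (iter k f (u n'))) in t2.
set D := mdist (u n') (iter k f (u n')) in t2 *.
rewrite leNgt; apply/negP => Dlt.
exact: (keyR _ _ _ _ _ _ _ nk t1 t2 de h Dlt).
Qed.

End Dyn.

Lemma scr_sym {R : realType} {X : metricType R} (f : X -> X) d a b :
  scrambled_pair f d a b -> scrambled_pair f d b a.
Proof.
have E : (fun n => (mdist (iter n f b) (iter n f a))%:E) =
         (fun n => (mdist (iter n f a) (iter n f b))%:E).
  by apply: funext => n; rewrite metric_sym.
by rewrite /scrambled_pair E.
Qed.

Theorem proposition1p5 (R : realType) (X : metricType R) (f : X -> X) :
  compact [set: X] -> continuous f ->
  (exists x : X,
     infinite_set (omega_limit f x) /\
     (exists p, omega_limit f x p /\ periodic_point f p) /\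
     (exists q, isolated (omega_limit f x) q)) ->
  exists delta : R, 0 < delta /\
    exists S : set X, infinite_set S /\ scrambled_set f delta S.
Proof.
move=> cpt fc [x [inf [[p [po [m [m0 per]]]] [q [qin [V Vq VE]]]]]].
pose u n := iter n f x.
have po' : clus u (fun _ => True) p by apply/clusterP.
have qo' : clus u (fun _ => True) q by apply/clusterP; exact: set_mem qin.
have [r r0' rV] := (nbhs_ballP _ _).1 Vq.
have r0 : 0 < r := r0'.
have iso : forall y, clus u (fun _ => True) y -> mdist q y < r -> y = q.
  move=> y yo qy.
  have : (V `&` omega_limit f x) y.
    split; last exact/clusterP.
    by apply: rV; rewrite ballEmdist.
  by rewrite VE.
have nonper : forall k, (0 < k)%N -> r <= mdist q (iter k f q).
  move=> k k0; rewrite leNgt; apply/negP => qk.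
  apply: (@lemmaA _ _ f cpt fc x q r inf qo' r0 iso k k0).
  by apply: iso => //; apply: omega_iter.
exists (r / 2); split; first by rewrite divr_gt0.
pose g k := u (k * m)%N.
have ginj : forall a b, (a < b)%N -> g a <> g b.
  move=> a b ab gab; apply: inf.
  apply: (@fin_omega _ _ f x u (b * m)%N) => y yo.
  apply: (@fin_orbit _ _ f x (a * m)%N) => //.
  by rewrite ltn_pmul2r.
exists (range g); split.
  move=> fS; apply: infinite_nat.
  have ce : (range g #= [set: nat])%card.
    apply: inj_card_eq => a b _ _ gab.
    case: (ltngtP a b) => // ab; first by have := ginj _ _ ab gab.
    by have := ginj _ _ ab (esym gab).
  move: ce; rewrite card_eq_le => /andP[_ le].
  exact: card_le_finite le fS.
move=> _ _ [a _ <-] [b _ <-] gab.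
have mdv : forall a b, (m %| b * m - a * m)%N by move=> a0 b0; rewrite -mulnBl dvdn_mull.
case: (ltngtP a b) => ab.
- apply: (@pair_ok _ _ f fc x p m q r) => //.
  by rewrite ltn_pmul2r.
- apply: scr_sym; apply: (@pair_ok _ _ f fc x p m q r) => //.
  by rewrite ltn_pmul2r.
- by subst b.
Qed.
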